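(* Assume $T$ and $D$ are known and set $$\eta=\frac{1}{4e\beta},\qquad \beta=\sqrt{\frac{\frac{eKT/2+D}{4e}+D}{4e\ln K}}.$$ Then the expected regret of Skipper$(\beta,\mathrm{DEW}(\eta,\beta))$ against an oblivious adversary satisfies $$\bar{\mathcal R}_T\le 2\sqrt{\left(\frac{KTe}{2}+(1+4e)D\right)\ln K}.$$
   Context: Setting: fix integers $K\ge 2$, $T\ge 1$, and write $[K]=\{1,\dots,K\}$. An oblivious adversary fixes in advance losses $\ell_t^a\in[0,1]$ for $t=1,2,\dots$, $a\in[K]$, and nonnegative integer delays $d_1,d_2,\dots$. In each round $t$ the learner picks (possibly at random) an action $A_t\in[K]$ and suffers loss $\ell_t^{A_t}$; at the end of round $t$ (after $A_t$ has been chosen) it observes the pairs $(s,\ell_s^{A_s})$ for all $s\le t$ with $s+d_s=t$. The expected regret is $\bar{\mathcal R}_T=\mathbb E\big[\sum_{t=1}^T\ell_t^{A_t}\big]-\min_{a\in[K]}\sum_{t=1}^T\ell_t^a$, the expectation being over the learner's randomization. $D=\sum_{t=1}^T d_t$. Algorithm DEW (delayed exponential weights) with inputs $\eta>0$ and $d_{\max}$: set $\eta'=\min\{\eta,(4e\,d_{\max})^{-1}\}$ and $w_0^a=1$ for all $a$. For $t=1,2,\dots$: let $p_t^a=w_{t-1}^a/\sum_b w_{t-1}^b$; draw $A_t\sim p_t$ and play it; at the end of round $t$, for every received pair $(s,\ell_s^{A_s})$ form the estimates $\hat\ell_s^a=\ell_s^a\mathbb 1(a=A_s)/p_s^a$ for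 all $a$; update $w_t^a=w_{t-1}^a\exp\big(-\eta'\sum_{s}\hat\ell_s^a\big)$, the sum over pairs received at the end of round $t$. Skipper$(\beta,\mathcal A)$ with threshold $\beta>0$ and base algorithm $\mathcal A$: in every round $t$ it plays the action $A_t$ proposed by $\mathcal A$, and at the end of round $t$ it passes to $\mathcal A$ exactly those observed pairs $(s,\ell_s^{A_s})$ with $s+d_s=t$ and $d_s<\beta$. Skipper$(\beta,\mathrm{DEW}(\eta,\beta))$ denotes Skipper with threshold $\beta$ wrapping DEW with learning rate $\eta$ and $d_{\max}=\beta$. *)

(* Defs.v *)
From Stdlib Require Import Reals List Arith.
Import ListNotations.
Open Scope R_scope.

Fixpoint rsum (n : nat) (f : nat -> R) : R :=
  match n with O => 0 | S m => rsum m f + f m end.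

Fixpoint rprod (n : nat) (f : nat -> R) : R :=
  match n with O => 1 | S m => rprod m f * f m end.

(* Actions are 0..K-1, rounds are 1,2,...; l t a = loss of action a at round t,
   d t = delay of round t.  A : nat -> nat gives the learner's action at each round. *)

Definition dew_rate (eta dmax : R) : R := Rmin eta (/ (4 * exp 1 * dmax)).

(* Weights of DEW(eta, dmax) wrapped in Skipper(beta).
   dew_W ... n s a = w_s^a for every s <= n (for s > n it is w_n^a).
   At the end of round n, the pairs (s, l_s^{A_s}) with s >= 1, s + d_s = n and
   d_s < beta are passed to DEW, which updates with the importance-weighted
   estimates l_s^a 1(a = A_s) / p_s^a. *)
Fixpoint dew_W (K : nat) (l : nat -> nat -> R) (d : nat -> nat)
    (etap beta : R) (A : nat -> nat) (n : nat) : nat -> nat -> R :=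
  match n with
  | O => fun _ _ => 1
  | S m =>
      let Wm := dew_W K l d etap beta A m in
      fun s a =>
        if Nat.leb s m then Wm s a
        else
          Wm m a *
          exp (- etap *
               rsum (S n) (fun s' =>
                 if (Nat.leb 1 s' && Nat.eqb (s' + d s') n)%bool then
                   if Rlt_dec (INR (d s')) beta then
                     (* p_{s'}^a = w_{s'-1}^a / sum_b w_{s'-1}^b *)
                     l s' a * (if Nat.eqb a (A s') then 1 else 0)
                       / (Wm (s' - 1)%nat a / rsum K (fun b => Wm (s' - 1)%nat b))
                   else 0
                 else 0))
  end.

Definition dew_prob (K : nat) (l : nat -> nat -> R) (d : nat -> nat)
    (etap beta : R) (A : nat -> nat) (t a : nat) : R :=
  let W := dew_W K l d etap beta A (t - 1)%nat in
  W (t - 1)%nat a / rsum K (fun b => W (t - 1)%nat b).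

Fixpoint all_seqs (T K : nat) : list (list nat) :=
  match T with
  | O => [nil]
  | S T' => flat_map (fun h => map (fun a => h ++ [a]) (seq 0 K)) (all_seqs T' K)
  end.

Definition act_of (h : list nat) (s : nat) : nat := nth (s - 1)%nat h O.

(* E[ sum_{t=1}^T l_t^{A_t} ] for Skipper(beta, DEW(eta, dmax)):
   sum over all action sequences of (probability of the sequence) * (its loss). *)
Definition expected_loss (K T : nat) (l : nat -> nat -> R) (d : nat -> nat)
    (eta dmax beta : R) : R :=
  let etap := dew_rate eta dmax in
  fold_right
    (fun h acc =>
       let A := act_of h in
       acc + rprod T (fun i => dew_prob K l d etap beta A (S i) (A (S i)))
             * rsum T (fun i => l (S i) (A (S i))))
    0 (all_seqs T K).

Definition cum_loss (T : nat) (l : nat -> nat -> R) (a : nat) : R :=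
  rsum T (fun i => l (S i) a).

Definition best_loss (K T : nat) (l : nat -> nat -> R) : R :=
  fold_right Rmin (cum_loss T l O) (map (cum_loss T l) (seq 0 K)).

Definition regret_skipper_dew (K T : nat) (l : nat -> nat -> R) (d : nat -> nat)
    (eta dmax beta : R) : R :=
  expected_loss K T l d eta dmax beta - best_loss K T l.

Definition total_delay (T : nat) (d : nat -> nat) : R :=
  rsum T (fun i => INR (d (S i))).

(* Main.v *)
Require Import Defs.
From Stdlib Require Import Reals List Arith Lia Lra FunctionalExtensionality.
Import ListNotations.
Open Scope R_scope.


Lemma rsum_ext n f g : (forall i, (i < n)%nat -> f i = g i) -> rsum n f = rsum n g.
Proof. induction n; simpl; intros H; auto. rewrite IHn by (intros; apply H; lia). rewrite H by lia; auto. Qed.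

Lemma rsum_le n f g : (forall i, (i < n)%nat -> f i <= g i) -> rsum n f <= rsum n g.
Proof. induction n; simpl; intros H; [lra|]. specialize (IHn (fun i Hi => H i ltac:(lia))). specialize (H n ltac:(lia)). lra. Qed.

Lemma rsum_plus n f g : rsum n (fun i => f i + g i) = rsum n f + rsum n g.
Proof. induction n; simpl; [lra|]. rewrite IHn; lra. Qed.

Lemma rsum_minus n f g : rsum n (fun i => f i - g i) = rsum n f - rsum n g.
Proof. induction n; simpl; [lra|]. rewrite IHn; lra. Qed.

Lemma rsum_scal n c f : rsum n (fun i => c * f i) = c * rsum n f.
Proof. induction n; simpl; [lra|]. rewrite IHn; lra. Qed.

Lemma rsum_scal_r n c f : rsum n (fun i => f i * c) = rsum n f * c.
Proof. induction n; simpl; [lra|]. rewrite IHn; lra. Qed.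

Lemma rsum_nonneg n f : (forall i, (i < n)%nat -> 0 <= f i) -> 0 <= rsum n f.
Proof. intros H. apply Rle_trans with (rsum n (fun _ => 0)).
 - clear H. induction n; simpl; lra.
 - apply rsum_le; auto. Qed.

Lemma rsum_zero n : rsum n (fun _ => 0) = 0.
Proof. induction n; simpl; lra. Qed.

Lemma rsum_const n c : rsum n (fun _ => c) = INR n * c.
Proof. induction n; simpl rsum; [simpl; lra|]. rewrite IHn, S_INR; lra. Qed.

Lemma rsum_swap n m (f : nat -> nat -> R) :
  rsum n (fun i => rsum m (fun j => f i j)) = rsum m (fun j => rsum n (fun i => f i j)).
Proof. induction n; simpl.
 - rewrite rsum_zero; auto.
 - rewrite IHn, <- rsum_plus; auto. Qed.

Lemma rsum_shift n f : rsum (S n) f = f O + rsum n (fun j => f (S j)).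
Proof. induction n; simpl; [lra|]. simpl in IHn. rewrite IHn. lra. Qed.

Lemma rsum_ge_term n f i : (forall j, (j < n)%nat -> 0 <= f j) -> (i < n)%nat -> f i <= rsum n f.
Proof. induction n; intros H Hi; [lia|]. simpl.
 assert (0 <= rsum n f) by (apply rsum_nonneg; intros; apply H; lia).
 destruct (Nat.eq_dec i n).
 - subst; lra.
 - specialize (IHn (fun j Hj => H j ltac:(lia)) ltac:(lia)). specialize (H n ltac:(lia)). lra. Qed.

Lemma rsum_pos n f : (1 <= n)%nat -> (forall j, (j < n)%nat -> 0 < f j) -> 0 < rsum n f.
Proof. intros Hn H. destruct n; [lia|]. simpl.
 assert (0 <= rsum n f) by (apply rsum_nonneg; intros; apply Rlt_le, H; lia).
 specialize (H n ltac:(lia)). lra. Qed.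

Lemma rsum_collapse K b c : (b < K)%nat ->
  rsum K (fun a => if Nat.eqb a b then c a else 0) = c b.
Proof. induction K; intros Hb; [lia|]. simpl.
 destruct (Nat.eq_dec b K).
 - subst. rewrite Nat.eqb_refl. rewrite (rsum_ext _ _ (fun _ => 0)). rewrite rsum_zero; lra.
   intros i Hi. destruct (Nat.eqb_spec i K); [lia|auto].
 - rewrite IHK by lia. destruct (Nat.eqb_spec K b); [lia|lra]. Qed.

Lemma rsum_ind_le1 K b c : (forall a, 0 <= c a <= 1) ->
  rsum K (fun a => if Nat.eqb a b then c a else 0) <= 1.
Proof. intros Hc. destruct (Nat.lt_ge_cases b K).
 - rewrite rsum_collapse by auto. apply Hc.
 - rewrite (rsum_ext _ _ (fun _ => 0)). rewrite rsum_zero; lra.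
   intros i Hi. destruct (Nat.eqb_spec i b); [lia|auto]. Qed.

Lemma count_gt n a : rsum (S n) (fun x => if Rlt_dec a (INR x) then 1 else 0) <= Rmax 0 (INR n - a + 1).
Proof. induction n.
 - simpl rsum. replace (INR 0) with 0 by reflexivity. destruct (Rlt_dec a 0); unfold Rmax; destruct (Rle_dec 0 (0 - a + 1)); lra.
 - change (rsum (S (S n)) ?f) with (rsum (S n) f + f (S n)). rewrite S_INR.
   destruct (Rlt_dec a (INR (S n))) as [r|r]; rewrite ?S_INR in r; unfold Rmax in *;
   destruct (Rle_dec 0 (INR n - a + 1)); destruct (Rle_dec 0 (INR n + 1 - a + 1)); lra. Qed.

Lemma count_interval T x dd : rsum T (fun i => if ((x <? S i) && (S i <=? x + dd))%bool then 1 else 0) <= INR dd.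
Proof. assert (H: rsum T (fun i => if ((x <? S i) && (S i <=? x + dd))%bool then 1 else 0) <= INR (Nat.min dd (T - x))).
 { induction T.
   - change (rsum 0 ?f) with 0. apply pos_INR.
   - change (rsum (S T) ?f) with (rsum T f + f T); cbv beta. destruct (Nat.ltb_spec x (S T)); destruct (Nat.leb_spec (S T) (x+dd)); cbn [andb].
     + replace (Nat.min dd (S T - x)) with (S (Nat.min dd (T - x))) by lia. rewrite S_INR. lra.
     + assert (INR (Nat.min dd (T - x)) <= INR (Nat.min dd (S T - x))) by (apply le_INR; lia). lra.
     + assert (INR (Nat.min dd (T - x)) <= INR (Nat.min dd (S T - x))) by (apply le_INR; lia). lra.
     + assert (INR (Nat.min dd (T - x)) <= INR (Nat.min dd (S T - x))) by (apply le_INR; lia). lra. }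
 eapply Rle_trans; [exact H|]. apply le_INR; lia. Qed.

Lemma ln_le_minus1 u : 0 < u -> ln u <= u - 1.
Proof. intros Hu. pose proof (exp_ineq1_le (ln u)). rewrite exp_ln in H; lra. Qed.

Lemma exp_neg_quad z : 0 <= z -> exp (- z) <= 1 - z + z ^ 2.
Proof. intros Hz.
 assert (H1 : (1 + z/2) ^ 2 <= exp z).
 { replace z with (z/2 + z/2) at 2 by field. rewrite exp_plus.
   pose proof (exp_ineq1_le (z/2)). simpl. nra. }
 rewrite exp_Ropp.
 assert (0 < exp z) by apply exp_pos.
 apply Rmult_le_reg_l with (exp z); auto. rewrite Rinv_r by lra.
 apply Rle_trans with ((1 + z/2)^2 * (1 - z + z^2)).
 - simpl. nra.
 - apply Rmult_le_compat_r; [nra|auto]. Qed.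

Lemma exp_1_gt : 5/2 <= exp 1.
Proof. set (a := exp (1/8)). assert (Ha : 9/8 <= a) by (pose proof (exp_ineq1_le (1/8)); unfold a; lra).
 assert (E : exp 1 = a*a*a*a*a*a*a*a).
 { unfold a. rewrite <- !exp_plus. f_equal; lra. }
 rewrite E. assert (1 <= a) by lra.
 assert (9/8*(9/8) <= a*a) by nra.
 assert (9/8*(9/8)*(9/8)*(9/8) <= a*a*(a*a)) by nra.
 assert (9/8*(9/8)*(9/8)*(9/8)*(9/8*(9/8)*(9/8)*(9/8)) <= a*a*(a*a)*(a*a*(a*a))) by nra.
 replace (a*a*a*a*a*a*a*a) with (a*a*(a*a)*(a*a*(a*a))) by ring. lra. Qed.

Lemma Rdiv_le_0_compat a b : 0 <= a -> 0 < b -> 0 <= a / b.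
Proof. intros. unfold Rdiv. apply Rmult_le_pos; auto. apply Rlt_le, Rinv_0_lt_compat; auto. Qed.

Definition vf (e : R) (y : nat -> nat -> R) (s a : nat) : R := exp (- e * rsum s (fun x => y x a)).
Definition qf (K : nat) (e : R) (y : nat -> nat -> R) (s a : nat) : R := vf e y s a / rsum K (vf e y s).

Lemma vf_pos e y s a : 0 < vf e y s a.
Proof. apply exp_pos. Qed.

Lemma Vf_pos K e y s : (1 <= K)%nat -> 0 < rsum K (vf e y s).
Proof. intros; apply rsum_pos; auto; intros; apply vf_pos. Qed.

Lemma qf_sum K e y s : (1 <= K)%nat -> rsum K (qf K e y s) = 1.
Proof. intros HK. unfold qf. rewrite (rsum_ext _ _ (fun a => vf e y s a * / rsum K (vf e y s))) by (intros; reflexivity).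
 rewrite rsum_scal_r. apply Rinv_r. apply Rgt_not_eq, Vf_pos; auto. Qed.

Lemma qf_nonneg K e y s a : (1 <= K)%nat -> 0 <= qf K e y s a.
Proof. intros. unfold qf. apply Rlt_le, Rdiv_lt_0_compat; [apply vf_pos|apply Vf_pos; auto]. Qed.

Lemma ln_div a b : 0 < a -> 0 < b -> ln (a / b) = ln a - ln b.
Proof. intros. unfold Rdiv. rewrite ln_mult; [rewrite ln_Rinv; [ring|auto]|auto|apply Rinv_0_lt_compat; auto]. Qed.

Lemma potential (K n : nat) (e : R) (y : nat -> nat -> R) (astar : nat) :
  (1 <= K)%nat -> 0 < e -> (astar < K)%nat -> (forall s a, 0 <= y s a) ->
  rsum n (fun s => rsum K (fun a => qf K e y s a * y s a)) <=
  ln (INR K) / e + rsum n (fun s => y s astar) + e * rsum n (fun s => rsum K (fun a => qf K e y s a * (y s a)^2)).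
Proof. intros HK He Ha Hy.
 set (V := fun s => rsum K (vf e y s)).
 assert (HV : forall s, 0 < V s) by (intros; apply Vf_pos; auto).
 assert (H0 : V O = INR K).
 { unfold V, vf. simpl rsum. rewrite (rsum_ext _ _ (fun _ => 1)). rewrite rsum_const; lra.
   intros. replace (- e * 0) with 0 by ring. apply exp_0. }
 assert (Hstep : forall s, ln (V (S s)) - ln (V s) <=
    - e * rsum K (fun a => qf K e y s a * y s a) + e^2 * rsum K (fun a => qf K e y s a * (y s a)^2)).
 { intros s. rewrite <- ln_div by auto.
   eapply Rle_trans; [apply ln_le_minus1; apply Rdiv_lt_0_compat; auto|].
   assert (E : V (S s) / V s = rsum K (fun a => qf K e y s a * exp (- (e * y s a)))).
   { unfold V, qf, Rdiv. rewrite <- rsum_scal_r. apply rsum_ext. intros a _.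
     unfold vf. change (rsum (S s) ?f) with (rsum s f + f s). cbv beta.
     replace (- e * (rsum s (fun x => y x a) + y s a)) with (- e * rsum s (fun x => y x a) + - (e * y s a)) by ring.
     rewrite exp_plus. ring. }
   rewrite E.
   assert (rsum K (fun a => qf K e y s a * exp (- (e * y s a))) <= rsum K (fun a => qf K e y s a * (1 - e * y s a + (e * y s a)^2))).
   { apply rsum_le. intros a _. apply Rmult_le_compat_l; [apply qf_nonneg; auto|].
     apply exp_neg_quad. specialize (Hy s a). nra. }
   rewrite (rsum_ext _ (fun a => qf K e y s a * (1 - e * y s a + (e * y s a)^2)) (fun a => qf K e y s a + (- e * (qf K e y s a * y s a) + e^2 * (qf K e y s a * (y s a)^2)))) in H by (intros; ring).
   rewrite rsum_plus, rsum_plus, rsum_scal, rsum_scal, qf_sum in H by auto. lra. }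
 assert (Hind : ln (V n) - ln (V O) <= rsum n (fun s => - e * rsum K (fun a => qf K e y s a * y s a) + e^2 * rsum K (fun a => qf K e y s a * (y s a)^2))).
 { induction n; [change (rsum 0 _) with 0; lra|]. change (rsum (S n) ?f) with (rsum n f + f n); cbv beta. specialize (Hstep n). lra. }
 rewrite rsum_plus, rsum_scal, rsum_scal in Hind.
 assert (Hlow : - e * rsum n (fun s => y s astar) <= ln (V n)).
 { replace (- e * rsum n (fun s => y s astar)) with (ln (vf e y n astar)) by (unfold vf; apply ln_exp).
   destruct (Rle_lt_or_eq_dec _ _ (rsum_ge_term K (vf e y n) astar (fun j _ => Rlt_le _ _ (vf_pos e y n j)) Ha)) as [Hl|Hl].
   - apply Rlt_le, ln_increasing; auto. apply vf_pos.
   - unfold V. rewrite Hl; lra. }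
 rewrite H0 in Hind.
 assert (e * rsum n (fun s => rsum K (fun a => qf K e y s a * y s a)) <= ln (INR K) + e * rsum n (fun s => y s astar) + e^2 * rsum n (fun s => rsum K (fun a => qf K e y s a * (y s a)^2))) by lra.
 apply Rmult_le_reg_l with e; auto.
 replace (e * (ln (INR K) / e + rsum n (fun s => y s astar) + e * rsum n (fun s => rsum K (fun a => qf K e y s a * (y s a)^2))))
   with (ln (INR K) + e * rsum n (fun s => y s astar) + e^2 * rsum n (fun s => rsum K (fun a => qf K e y s a * (y s a)^2))) by (field; lra).
 auto. Qed.

Section Dew.
Variables (K : nat) (l : nat -> nat -> R) (d : nat -> nat) (e beta : R).
Hypothesis HK : (1 <= K)%nat.

Definition Wf A n := dew_W K l d e beta A n.
Definition w A n a := dew_W K l d e beta A n n a.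
Definition pr A t a := dew_prob K l d e beta A t a.
Definition lh A x a := l x a * (if Nat.eqb a (A x) then 1 else 0) / pr A x a.
Definition yy A x a := if 1 <=? x then (if Rlt_dec (INR (d x)) beta then lh A x a else 0) else 0.
Definition Sc A n a := rsum (S n) (fun x => if x + d x <=? n then yy A x a else 0).

Lemma dew_W_S A m s a : dew_W K l d e beta A (S m) s a =
  if Nat.leb s m then dew_W K l d e beta A m s a
  else dew_W K l d e beta A m m a *
          exp (- e *
               rsum (S (S m)) (fun s' =>
                 if (Nat.leb 1 s' && Nat.eqb (s' + d s') (S m))%bool then
                   if Rlt_dec (INR (d s')) beta then
                     l s' a * (if Nat.eqb a (A s') then 1 else 0)
                       / (dew_W K l d e beta A m (s' - 1)%nat a / rsum K (fun b => dew_W K l d e beta A m (s' - 1)%nat b))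
                   else 0
                 else 0)).
Proof. reflexivity. Qed.

Lemma W_stable A n s a : (s <= n)%nat -> dew_W K l d e beta A n s a = dew_W K l d e beta A s s a.
Proof. induction n; intros Hs.
 - replace s with O by lia; auto.
 - destruct (Nat.eq_dec s (S n)); [subst; auto|].
   rewrite dew_W_S. replace (s <=? n)%nat with true by (symmetry; apply Nat.leb_le; lia). apply IHn; lia. Qed.

Lemma w_succ A m a : w A (S m) a = w A m a * exp (- e * rsum (S (S m)) (fun x => if x + d x =? S m then yy A x a else 0)).
Proof. unfold w at 1. rewrite dew_W_S. replace (S m <=? m)%nat with false by (symmetry; apply Nat.leb_gt; lia).
 f_equal. f_equal. f_equal. apply rsum_ext. intros x Hx.
 assert (Hf: (fun b => dew_W K l d e beta A m (x-1) b) = (fun b => dew_W K l d e beta A (x-1) (x-1) b)).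
 { extensionality b. apply W_stable; lia. }
 rewrite Hf, (W_stable A m (x-1)) by lia.
 unfold yy, lh, pr, dew_prob.
 destruct (1 <=? x)%nat; destruct (x + d x =? S m)%nat; cbn [andb]; auto. Qed.

Lemma w_formula A n a : w A n a = exp (- e * Sc A n a).
Proof. induction n.
 - unfold w, Sc. simpl dew_W. change (rsum 1 ?f) with (0 + f O). cbv beta.
   assert (Hy: (if 0 + d 0 <=? 0 then yy A 0 a else 0) = 0) by (destruct (0 + d 0 <=? 0)%nat; reflexivity).
   rewrite Hy. replace (-e*(0+0)) with 0 by ring. rewrite exp_0. reflexivity.
 - rewrite w_succ, IHn, <- exp_plus. f_equal.
   unfold Sc. rewrite <- Rmult_plus_distr_l. f_equal.
   change (rsum (S (S n)) (fun x => if x + d x <=? S n then yy A x a else 0)) with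
     (rsum (S n) (fun x => if x + d x <=? S n then yy A x a else 0) + (if S n + d (S n) <=? S n then yy A (S n) a else 0)).
   change (rsum (S (S n)) (fun x => if x + d x =? S n then yy A x a else 0)) with
     (rsum (S n) (fun x => if x + d x =? S n then yy A x a else 0) + (if S n + d (S n) =? S n then yy A (S n) a else 0)).
   assert (E: (if S n + d (S n) <=? S n then yy A (S n) a else 0) = (if S n + d (S n) =? S n then yy A (S n) a else 0)).
   { destruct (Nat.leb_spec (S n + d (S n)) (S n)); destruct (Nat.eqb_spec (S n + d (S n)) (S n)); auto; lia. }
   rewrite E, <- Rplus_assoc, <- rsum_plus. f_equal. apply rsum_ext. intros x Hx.
   destruct (Nat.leb_spec (x + d x) (S n)); destruct (Nat.leb_spec (x + d x) n); destruct (Nat.eqb_spec (x + d x) (S n)); try lia; lra. Qed.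

Lemma w_pos A n a : 0 < w A n a.
Proof. rewrite w_formula; apply exp_pos. Qed.


Hypothesis Hl : forall t a, 0 <= l t a <= 1.
Hypothesis Hb : 0 < beta.
Hypothesis He : e = / (4 * exp 1 * beta).

Lemma exp1_pos : 0 < exp 1. Proof. apply exp_pos. Qed.
Lemma Heb : 4 * e * beta * exp 1 = 1.
Proof. rewrite He. pose proof exp1_pos. field. lra. Qed.
Lemma He0 : 0 < e.
Proof. rewrite He. pose proof exp1_pos. apply Rinv_0_lt_compat. nra. Qed.

Definition WW A n := rsum K (w A n).

Lemma WW_pos A n : 0 < WW A n.
Proof. apply rsum_pos; auto. intros; apply w_pos. Qed.

Lemma pr_eq A t a : pr A t a = w A (t-1) a / WW A (t-1).
Proof. reflexivity. Qed.

Lemma pr_pos A t a : 0 < pr A t a.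
Proof. rewrite pr_eq. apply Rdiv_lt_0_compat; [apply w_pos|apply WW_pos]. Qed.

Lemma pr_sum A t : rsum K (pr A t) = 1.
Proof. rewrite (rsum_ext _ _ (fun a => w A (t-1) a * / WW A (t-1))) by (intros; reflexivity).
 rewrite rsum_scal_r. apply Rinv_r. apply Rgt_not_eq, WW_pos. Qed.

Lemma lh_nonneg A x a : 0 <= lh A x a.
Proof. unfold lh. apply Rmult_le_pos; [|apply Rlt_le, Rinv_0_lt_compat, pr_pos].
 apply Rmult_le_pos; [apply Hl|destruct (a =? A x)%nat; lra]. Qed.

Lemma yy_nonneg A x a : 0 <= yy A x a.
Proof. unfold yy. destruct (1 <=? x)%nat; [destruct Rlt_dec|]; try lra. apply lh_nonneg. Qed.

Lemma Sc_nonneg A n a : 0 <= Sc A n a.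
Proof. apply rsum_nonneg. intros. destruct (_ <=? _)%nat; [apply yy_nonneg|lra]. Qed.

Lemma exp_neg_le1 z : 0 <= z -> exp (- e * z) <= 1.
Proof. intros. rewrite <- exp_0. destruct (Req_dec z 0). subst; rewrite Rmult_0_r; lra.
 apply Rlt_le, exp_increasing. pose proof He0. nra. Qed.

Lemma w_succ_le A m a : w A (S m) a <= w A m a.
Proof. rewrite w_succ. pose proof (w_pos A m a).
 assert (exp (- e * rsum (S (S m)) (fun x => if x + d x =? S m then yy A x a else 0)) <= 1).
 { apply exp_neg_le1. apply rsum_nonneg. intros. destruct (_ =? _)%nat; [apply yy_nonneg|lra]. }
 nra. Qed.

Lemma w_mono A m n a : (m <= n)%nat -> w A n a <= w A m a.
Proof. intros H. induction H; [lra|]. pose proof (w_succ_le A m0 a); lra. Qed.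

Lemma WW_mono A m n : (m <= n)%nat -> WW A n <= WW A m.
Proof. intros H. apply rsum_le. intros; apply w_mono; auto. Qed.

Lemma rsum_ind_le K' b c : 0 <= c -> rsum K' (fun a => (if Nat.eqb a b then 1 else 0) * c) <= c.
Proof. intros Hc. rewrite rsum_scal_r.
 assert (rsum K' (fun a => if Nat.eqb a b then 1 else 0) <= 1) by (apply (rsum_ind_le1 K' b (fun _ => 1)); intros; lra).
 assert (0 <= rsum K' (fun a => if Nat.eqb a b then 1 else 0)) by (apply rsum_nonneg; intros; destruct (_ =? _)%nat; lra).
 nra. Qed.

Definition pind x := if Rlt_dec (INR (d x)) beta then 1 else 0.

Lemma py_bound A n x : (1 <= x <= n)%nat ->
  rsum K (fun a => pr A n a * yy A x a) <= pind x * (WW A (x-1) / WW A (n-1)).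
Proof. intros Hx. unfold yy, pind. replace (1 <=? x)%nat with true by (symmetry; apply Nat.leb_le; lia).
 pose proof (WW_pos A (x-1)). pose proof (WW_pos A (n-1)).
 destruct Rlt_dec.
 2: { rewrite (rsum_ext _ _ (fun _ => 0)), rsum_zero by (intros; ring). lra. }
 rewrite Rmult_1_l.
 eapply Rle_trans; [|apply (rsum_ind_le K (A x))].
 2: { apply Rdiv_le_0_compat; lra. }
 apply rsum_le. intros a _. unfold lh.
 assert (Hr : pr A n a / pr A x a <= WW A (x-1) / WW A (n-1)).
 { rewrite !pr_eq. pose proof (w_pos A (n-1) a). pose proof (w_pos A (x-1) a).
   assert (w A (n-1) a <= w A (x-1) a) by (apply w_mono; lia).
   apply Rle_trans with (w A (x-1) a / WW A (n-1) / (w A (x-1) a / WW A (x-1))).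
   - unfold Rdiv. apply Rmult_le_compat_r. apply Rlt_le, Rinv_0_lt_compat, Rdiv_lt_0_compat; auto.
     apply Rmult_le_compat_r; auto. apply Rlt_le, Rinv_0_lt_compat; auto.
   - right. field. lra. }
 pose proof (pr_pos A x a). pose proof (pr_pos A n a). destruct (Hl x a).
 destruct (Nat.eqb a (A x)).
 - replace (pr A n a * (l x a * 1 / pr A x a)) with (l x a * (pr A n a / pr A x a)) by (field; lra).
   assert (0 <= pr A n a / pr A x a) by (apply Rdiv_le_0_compat; lra). nra.
 - replace (pr A n a * (l x a * 0 / pr A x a)) with 0 by (field; lra). lra. Qed.


Definition Bt A n a := rsum (S n) (fun x => if x + d x =? n then yy A x a else 0).
Definition gind x := if 1 <=? x then pind x else 0.
Definition cntR n := rsum (S n) (fun x => if x + d x =? n then gind x else 0).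
Definition cnt m n := rsum (S n) (fun x => if ((m <? x + d x) && (x + d x <=? n))%bool then gind x else 0).

Lemma pind_01 x : pind x = 0 \/ pind x = 1.
Proof. unfold pind; destruct Rlt_dec; auto. Qed.

Lemma step_bound A r : (1 <= r)%nat ->
  (forall x, (1 <= x <= r)%nat -> (x + d x)%nat = r -> pind x = 1 -> WW A (x-1) <= 2 * WW A (r-1)) ->
  WW A (r-1) - WW A r <= 2 * e * WW A (r-1) * cntR r.
Proof. intros Hr Hc. destruct r as [|m]; [lia|]. replace (S m - 1)%nat with m in * by lia.
 pose proof He0 as He0. pose proof (WW_pos A m) as HWm.
 assert (H1 : WW A m - WW A (S m) <= e * rsum K (fun a => w A m a * Bt A (S m) a)).
 { unfold WW. rewrite <- rsum_scal, <- rsum_minus. apply rsum_le. intros a _.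
   rewrite w_succ. fold (Bt A (S m) a).
   pose proof (exp_ineq1_le (- e * Bt A (S m) a)). pose proof (w_pos A m a). nra. }
 assert (H2 : rsum K (fun a => w A m a * Bt A (S m) a) = WW A m * rsum K (fun a => pr A (S m) a * Bt A (S m) a)).
 { rewrite <- rsum_scal. apply rsum_ext. intros a _. rewrite pr_eq. replace (S m - 1)%nat with m by lia. field. lra. }
 assert (H3 : rsum K (fun a => pr A (S m) a * Bt A (S m) a) <= 2 * cntR (S m)).
 { unfold Bt, cntR. rewrite (rsum_ext K _ (fun a => rsum (S (S m)) (fun x => if x + d x =? S m then pr A (S m) a * yy A x a else 0))).
   2: { intros a _. rewrite <- rsum_scal. apply rsum_ext. intros x _. destruct (_ =? _)%nat; ring. }
   rewrite rsum_swap, <- rsum_scal. apply rsum_le. intros x Hx.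
   destruct (Nat.eqb_spec (x + d x) (S m)); [|rewrite rsum_zero; lra].
   unfold gind. destruct (Nat.leb_spec 1 x).
   - eapply Rle_trans; [apply py_bound; lia|]. replace (S m - 1)%nat with m by lia.
     destruct (pind_01 x) as [E|E]; rewrite E; [lra|].
     specialize (Hc x ltac:(lia) e0 E). replace (S m - 1)%nat with m in Hc by lia.
     apply Rmult_le_reg_r with (WW A m); auto. unfold Rdiv. rewrite Rmult_assoc, Rmult_assoc, Rinv_l; lra.
   - replace x with O by lia. unfold yy. simpl. rewrite (rsum_ext _ _ (fun _ => 0)), rsum_zero by (intros; ring). lra. }
 rewrite H2 in H1. assert (e * WW A m * rsum K (fun a => pr A (S m) a * Bt A (S m) a) <= e * WW A m * (2 * cntR (S m))) by (apply Rmult_le_compat_l; nra). lra. Qed.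

Lemma cnt_succ m n : (m <= n)%nat -> cnt m (S n) = cnt m n + cntR (S n).
Proof. intros H. unfold cnt, cntR.
 rewrite (rsum_ext (S (S n)) (fun x => if ((m <? x + d x) && (x + d x <=? S n))%bool then gind x else 0)
    (fun x => (if ((m <? x + d x) && (x + d x <=? n))%bool then gind x else 0) + (if x + d x =? S n then gind x else 0))).
 2: { intros x _. destruct (Nat.ltb_spec m (x + d x)); destruct (Nat.leb_spec (x + d x) (S n)); destruct (Nat.leb_spec (x + d x) n); destruct (Nat.eqb_spec (x + d x) (S n)); cbn [andb]; try lia; ring. }
 rewrite rsum_plus. f_equal.
 change (rsum (S (S n)) ?f) with (rsum (S n) f + f (S n)). cbv beta.
 destruct (Nat.leb_spec (S n + d (S n)) n); [lia|]. rewrite Bool.andb_false_r. ring. Qed.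

Lemma cnt_bound m n : (m <= n)%nat -> cnt m n <= INR (n - m) + beta.
Proof. intros H. unfold cnt.
 eapply Rle_trans with (rsum (S n) (fun x => if Rlt_dec (INR m + 1 - beta) (INR x) then 1 else 0)).
 - apply rsum_le. intros x Hx. unfold gind, pind.
   destruct (Nat.ltb_spec m (x + d x)); destruct (Nat.leb_spec (x + d x) n); cbn [andb];
   destruct (1 <=? x)%nat; destruct (Rlt_dec (INR (d x)) beta) as [Hd|Hd]; destruct Rlt_dec as [Hq|Hq]; try lra.
   exfalso. apply Hq. assert (INR (m + 1) <= INR (x + d x)) by (apply le_INR; lia).
   rewrite !plus_INR in H2. simpl in H2. lra.
 - eapply Rle_trans; [apply count_gt|]. rewrite minus_INR by auto. unfold Rmax. pose proof (le_INR _ _ H). destruct Rle_dec; lra. Qed.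

Lemma cnt_nonneg m n : 0 <= cnt m n.
Proof. apply rsum_nonneg. intros. unfold gind. destruct (_ && _)%bool; [destruct (1 <=? i)%nat; [destruct (pind_01 i) as [E|E]; rewrite E|]|]; lra. Qed.

Lemma cntR_nonneg n : 0 <= cntR n.
Proof. apply rsum_nonneg. intros. unfold gind. destruct (_ =? _)%nat; [destruct (1 <=? i)%nat; [destruct (pind_01 i) as [E|E]; rewrite E|]|]; lra. Qed.

Lemma W_claim A : forall n m, (m <= n)%nat -> INR (n - m) < beta -> WW A m <= 2 * WW A n.
Proof. intros n. induction n as [n IH] using (well_founded_induction lt_wf). intros m Hmn Hb'.
 assert (Hstep : forall r, (1 <= r <= n)%nat -> WW A (r-1) - WW A r <= 2 * e * WW A (r-1) * cntR r).
 { intros r Hr. apply step_bound; [lia|]. intros x Hx Hxd Hp. apply IH; [lia|lia|].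
   replace (r - 1 - (x - 1))%nat with (d x) by lia. unfold pind in Hp. destruct Rlt_dec; auto. lra. }
 pose proof He0.
 assert (Htele : forall k, (m + k <= n)%nat -> WW A m - WW A (m + k) <= 2 * e * WW A m * cnt m (m + k)).
 { induction k; intros Hk.
   - rewrite Nat.add_0_r. assert (cnt m m = 0).
     { unfold cnt. rewrite (rsum_ext _ _ (fun _ => 0)), rsum_zero; auto. intros x _.
       destruct (Nat.ltb_spec m (x + d x)); destruct (Nat.leb_spec (x + d x) m); cbn [andb]; auto; lia. }
     rewrite H0; lra.
   - specialize (IHk ltac:(lia)). replace (m + S k)%nat with (S (m + k)) by lia.
     rewrite cnt_succ by lia.
     specialize (Hstep (S (m + k)) ltac:(lia)). replace (S (m + k) - 1)%nat with (m + k)%nat in Hstep by lia.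
     assert (WW A (m + k) <= WW A m) by (apply WW_mono; lia).
     pose proof (cntR_nonneg (S (m + k))). pose proof (WW_pos A (m + k)).
     assert (2*e*WW A (m+k)*cntR (S (m+k)) <= 2*e*WW A m*cntR (S (m+k))).
     { apply Rmult_le_compat_r; auto. apply Rmult_le_compat_l; lra. }
     lra. }
 specialize (Htele (n - m)%nat ltac:(lia)). replace (m + (n - m))%nat with n in Htele by lia.
 pose proof (cnt_bound m n Hmn). pose proof (WW_pos A m). pose proof Heb. pose proof exp_1_gt.
 assert (2 * e * WW A m * cnt m n <= 2 * e * WW A m * (INR (n - m) + beta)) by (apply Rmult_le_compat_l; nra).
 assert (2 * e * (INR (n - m) + beta) <= 4 * e * beta) by nra.
 assert (4 * e * beta <= 1/2).
 { assert (4 * e * beta = / exp 1) by (field_simplify_eq; [nra|lra]). rewrite H6.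
   apply Rmult_le_reg_l with (exp 1); [lra|]. rewrite Rinv_r by lra. lra. }
 nra. Qed.


Definition ys A j a := yy A (S j) a.
Definition Mc A s a := rsum s (fun x => if s <=? x + d x then yy A x a else 0).

Lemma Mc_nonneg A s a : 0 <= Mc A s a.
Proof. apply rsum_nonneg. intros. destruct (_ <=? _)%nat; [apply yy_nonneg|lra]. Qed.

Lemma vf_split A i a : vf e (ys A) i a = w A i a * exp (- e * Mc A (S i) a).
Proof. unfold vf. rewrite w_formula, <- exp_plus. f_equal.
 assert (E1 : rsum i (fun x => ys A x a) = rsum (S i) (fun x => yy A x a)).
 { rewrite rsum_shift. unfold ys. replace (yy A 0 a) with 0 by reflexivity. ring. }
 rewrite E1. unfold Sc, Mc. rewrite <- Rmult_plus_distr_l, <- rsum_plus. f_equal.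
 apply rsum_ext. intros x Hx. destruct (Nat.leb_spec (x + d x) i); destruct (Nat.leb_spec (S i) (x + d x)); try lia; ring. Qed.

Lemma pr_S A i a : pr A (S i) a = w A i a / WW A i.
Proof. rewrite pr_eq. replace (S i - 1)%nat with i by lia. auto. Qed.

Lemma V_eq A i : rsum K (vf e (ys A) i) = WW A i * rsum K (fun b => pr A (S i) b * exp (- e * Mc A (S i) b)).
Proof. rewrite <- rsum_scal. apply rsum_ext. intros b _. rewrite vf_split, pr_S. pose proof (WW_pos A i). field. lra. Qed.

Lemma V_le A i : rsum K (vf e (ys A) i) <= WW A i.
Proof. apply rsum_le. intros b _. rewrite vf_split. pose proof (w_pos A i b).
 pose proof (exp_neg_le1 _ (Mc_nonneg A (S i) b)). nra. Qed.

Lemma drift A i : rsum K (fun a => pr A (S i) a * l (S i) a) <=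
  rsum K (fun a => qf K e (ys A) i a * l (S i) a) + e * rsum K (fun a => pr A (S i) a * Mc A (S i) a).
Proof. rewrite <- rsum_scal, <- rsum_plus. apply rsum_le. intros a _.
 pose proof He0. pose proof (V_le A i). pose proof (Vf_pos K e (ys A) i HK). pose proof (WW_pos A i).
 assert (Hq : pr A (S i) a * exp (- e * Mc A (S i) a) <= qf K e (ys A) i a).
 { unfold qf. rewrite vf_split, pr_S. pose proof (w_pos A i a). pose proof (exp_pos (- e * Mc A (S i) a)).
   replace (w A i a / WW A i * exp (- e * Mc A (S i) a)) with (w A i a * exp (- e * Mc A (S i) a) / WW A i) by (field; lra).
   unfold Rdiv. apply Rmult_le_compat_l; [nra|].
   apply Rinv_le_contravar; auto. }
 pose proof (exp_ineq1_le (- e * Mc A (S i) a)). pose proof (pr_pos A (S i) a). pose proof (Mc_nonneg A (S i) a).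
 assert (pr A (S i) a - qf K e (ys A) i a <= e * (pr A (S i) a * Mc A (S i) a)) by nra.
 destruct (Hl (S i) a).
 destruct (Rle_dec (pr A (S i) a) (qf K e (ys A) i a)).
 - assert (0 <= e * (pr A (S i) a * Mc A (S i) a)) by (apply Rmult_le_pos; nra). nra.
 - nra. Qed.

Lemma q_ratio A i a : qf K e (ys A) i a * (1 - e * rsum K (fun b => pr A (S i) b * Mc A (S i) b)) <= pr A (S i) a.
Proof. pose proof He0. pose proof (Vf_pos K e (ys A) i HK) as HV. pose proof (WW_pos A i).
 assert (H1 : 1 - e * rsum K (fun b => pr A (S i) b * Mc A (S i) b) <= rsum K (vf e (ys A) i) / WW A i).
 { rewrite V_eq. replace (WW A i * rsum K (fun b => pr A (S i) b * exp (- e * Mc A (S i) b)) / WW A i)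
     with (rsum K (fun b => pr A (S i) b * exp (- e * Mc A (S i) b))) by (field; lra).
   rewrite <- (pr_sum A (S i)), <- rsum_scal, <- rsum_minus. apply rsum_le. intros b _.
   pose proof (exp_ineq1_le (- e * Mc A (S i) b)). pose proof (pr_pos A (S i) b). nra. }
 pose proof (qf_nonneg K e (ys A) i a HK).
 apply Rle_trans with (qf K e (ys A) i a * (rsum K (vf e (ys A) i) / WW A i)).
 - apply Rmult_le_compat_l; auto.
 - unfold qf. rewrite vf_split, pr_S. pose proof (w_pos A i a).
   pose proof (exp_neg_le1 _ (Mc_nonneg A (S i) a)).
   replace (w A i a * exp (- e * Mc A (S i) a) / rsum K (vf e (ys A) i) * (rsum K (vf e (ys A) i) / WW A i))
     with (w A i a * exp (- e * Mc A (S i) a) / WW A i) by (field; lra).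
   unfold Rdiv. apply Rmult_le_compat_r; [apply Rlt_le, Rinv_0_lt_compat; auto|]. nra. Qed.

Lemma Mc_bound A s : (1 <= s)%nat -> rsum K (fun b => pr A s b * Mc A s b) <= 2 * beta.
Proof. intros Hs. unfold Mc.
 rewrite (rsum_ext K _ (fun b => rsum s (fun x => if s <=? x + d x then pr A s b * yy A x b else 0))).
 2: { intros b _. rewrite <- rsum_scal. apply rsum_ext. intros x _. destruct (_ <=? _)%nat; ring. }
 rewrite rsum_swap.
 apply Rle_trans with (rsum s (fun x => 2 * (if Rlt_dec (INR s - beta) (INR x) then 1 else 0))).
 - apply rsum_le. intros x Hx. destruct (Nat.leb_spec s (x + d x)).
   2: { rewrite rsum_zero. destruct Rlt_dec; lra. }
   destruct (Nat.leb_spec 1 x).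
   + eapply Rle_trans; [apply py_bound; lia|]. unfold pind. pose proof (WW_pos A (x-1)). pose proof (WW_pos A (s-1)).
     destruct (Rlt_dec (INR (d x)) beta) as [Hd|Hd].
     * assert (WW A (x-1) <= 2 * WW A (s-1)).
       { apply W_claim; [lia|]. eapply Rle_lt_trans; [|exact Hd]. apply le_INR; lia. }
       destruct Rlt_dec as [Hq|Hq].
       -- apply Rmult_le_reg_r with (WW A (s-1)); auto. unfold Rdiv. rewrite Rmult_1_l, Rmult_assoc, Rinv_l; lra.
       -- exfalso. apply Hq. assert (Hs2 : INR s <= INR (x + d x)) by (apply le_INR; lia). rewrite plus_INR in Hs2. lra.
     * destruct Rlt_dec; lra.
   + replace x with O by lia. unfold yy. simpl. rewrite (rsum_ext _ _ (fun _ => 0)), rsum_zero by (intros; ring). destruct Rlt_dec; lra.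
 - rewrite rsum_scal. destruct s; [lia|]. pose proof (count_gt s (INR (S s) - beta)).
   rewrite S_INR in *. unfold Rmax in H. destruct Rle_dec; lra. Qed.


Lemma dep_W n A A' : (forall s, (1 <= s)%nat -> (s + d s <= n)%nat -> A s = A' s) ->
  dew_W K l d e beta A n = dew_W K l d e beta A' n.
Proof. induction n; intros H; [reflexivity|].
 extensionality s. extensionality a. rewrite !dew_W_S. rewrite IHn by (intros; apply H; lia).
 destruct (s <=? n)%nat; auto. f_equal. f_equal. f_equal. apply rsum_ext. intros x Hx.
 destruct (Nat.leb_spec 1 x); destruct (Nat.eqb_spec (x + d x) (S n)); cbn [andb]; auto.
 rewrite (H x) by lia. auto. Qed.

Lemma pr_dep t A A' a : (forall s, (1 <= s)%nat -> (s + d s <= t - 1)%nat -> A s = A' s) -> pr A t a = pr A' t a.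
Proof. intros H. unfold pr, dew_prob. rewrite (dep_W (t-1) A A' H). auto. Qed.


Definition lsumX {X : Type} (L : list X) (g : X -> R) := fold_right (fun x acc => acc + g x) 0 L.

Lemma lsumX_cons {X} (x : X) L g : lsumX (x :: L) g = lsumX L g + g x.
Proof. reflexivity. Qed.

Lemma lsumX_app {X} (L1 L2 : list X) g : lsumX (L1 ++ L2) g = lsumX L1 g + lsumX L2 g.
Proof. induction L1; simpl; [lra|]. unfold lsumX in *. simpl. rewrite IHL1. lra. Qed.

Lemma lsumX_map {X Y} (f : X -> Y) L g : lsumX (map f L) g = lsumX L (fun x => g (f x)).
Proof. induction L; simpl; auto. unfold lsumX in *; simpl. rewrite IHL; auto. Qed.

Lemma lsumX_flat_map {X Y} (f : X -> list Y) L g : lsumX (flat_map f L) g = lsumX L (fun x => lsumX (f x) g).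
Proof. induction L; [reflexivity|]. cbn [flat_map]. rewrite lsumX_app, IHL, lsumX_cons. lra. Qed.

Lemma lsumX_seq K' g : lsumX (seq 0 K') g = rsum K' g.
Proof. induction K'; auto. rewrite seq_S, lsumX_app, IHK'. simpl. unfold lsumX. simpl. lra. Qed.

Lemma lsumX_ext {X} (L : list X) g g' : (forall x, In x L -> g x = g' x) -> lsumX L g = lsumX L g'.
Proof. induction L; intros H; simpl; auto. unfold lsumX in *; simpl. rewrite IHL, H; auto. left; auto. intros; apply H; right; auto. Qed.

Lemma lsumX_le {X} (L : list X) g g' : (forall x, In x L -> g x <= g' x) -> lsumX L g <= lsumX L g'.
Proof. induction L; intros H; simpl; [unfold lsumX; simpl; lra|]. unfold lsumX in *; simpl.
 assert (g a <= g' a) by (apply H; left; auto). assert (fold_right (fun x acc => acc + g x) 0 L <= fold_right (fun x acc => acc + g' x) 0 L) by (apply IHL; intros; apply H; right; auto). lra. Qed.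

Lemma lsumX_plus {X} (L : list X) g g' : lsumX L (fun x => g x + g' x) = lsumX L g + lsumX L g'.
Proof. induction L; unfold lsumX in *; simpl; [lra|]. rewrite IHL. lra. Qed.

Lemma lsumX_scal {X} (L : list X) c g : lsumX L (fun x => c * g x) = c * lsumX L g.
Proof. induction L; unfold lsumX in *; simpl; [lra|]. rewrite IHL. lra. Qed.

Lemma all_len n h : In h (all_seqs n K) -> length h = n.
Proof. revert h. induction n; simpl; intros h Hh.
 - destruct Hh as [<-|[]]; auto.
 - apply in_flat_map in Hh. destruct Hh as [h0 [H0 H1]]. apply in_map_iff in H1. destruct H1 as [a [<- _]].
   rewrite length_app, (IHn h0 H0). simpl. lia. Qed.

Lemma act_app1 h a s : (1 <= s <= length h)%nat -> act_of (h ++ [a]) s = act_of h s.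
Proof. intros. unfold act_of. apply app_nth1. lia. Qed.

Lemma act_app2 h a : act_of (h ++ [a]) (S (length h)) = a.
Proof. unfold act_of. replace (S (length h) - 1)%nat with (length h) by lia. rewrite app_nth2 by lia. rewrite Nat.sub_diag. auto. Qed.

Lemma rprod_ext n f g : (forall i, (i < n)%nat -> f i = g i) -> rprod n f = rprod n g.
Proof. induction n; simpl; intros H; auto. rewrite IHn by (intros; apply H; lia). rewrite H by lia; auto. Qed.

Definition prob n h := rprod n (fun i => pr (act_of h) (S i) (act_of h (S i))).
Definition Ex n (F : list nat -> R) := fold_right (fun h acc => acc + prob n h * F h) 0 (all_seqs n K).

Lemma Ex_lsum n F : Ex n F = lsumX (all_seqs n K) (fun h => prob n h * F h).
Proof. reflexivity. Qed.

Lemma prob_pos n h : 0 < prob n h.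
Proof. unfold prob. induction n; simpl; [lra|]. apply Rmult_lt_0_compat; auto. apply pr_pos. Qed.

Lemma pr_app h a t b : (t <= S (length h))%nat -> pr (act_of (h ++ [a])) t b = pr (act_of h) t b.
Proof. intros Ht. apply pr_dep. intros s H1 H2. apply act_app1. lia. Qed.

Lemma Ex_rec n F : Ex (S n) F = Ex n (fun h => rsum K (fun a => pr (act_of h) (S n) a * F (h ++ [a]))).
Proof. rewrite !Ex_lsum. simpl all_seqs. rewrite lsumX_flat_map. apply lsumX_ext. intros h Hh.
 pose proof (all_len n h Hh) as Hlen.
 rewrite lsumX_map, lsumX_seq, <- rsum_scal. apply rsum_ext. intros a _.
 unfold prob. simpl rprod. rewrite <- Hlen, act_app2, pr_app by lia.
 rewrite (rprod_ext (length h) _ (fun i => pr (act_of h) (S i) (act_of h (S i)))). ring.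
 intros i Hi. rewrite pr_app by lia. rewrite act_app1 by lia. auto. Qed.

Lemma Ex_ext n F G : (forall h, length h = n -> F h = G h) -> Ex n F = Ex n G.
Proof. intros H. rewrite !Ex_lsum. apply lsumX_ext. intros h Hh. rewrite H; auto. apply all_len; auto. Qed.

Lemma Ex_le n F G : (forall h, length h = n -> F h <= G h) -> Ex n F <= Ex n G.
Proof. intros H. rewrite !Ex_lsum. apply lsumX_le. intros h Hh. apply Rmult_le_compat_l.
 apply Rlt_le, prob_pos. apply H, all_len; auto. Qed.

Lemma Ex_plus n F G : Ex n (fun h => F h + G h) = Ex n F + Ex n G.
Proof. rewrite !Ex_lsum, <- lsumX_plus. apply lsumX_ext; intros; ring. Qed.

Lemma Ex_scal n c F : Ex n (fun h => c * F h) = c * Ex n F.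
Proof. rewrite !Ex_lsum, <- lsumX_scal. apply lsumX_ext; intros; ring. Qed.

Lemma Ex_zero n : Ex n (fun _ => 0) = 0.
Proof. replace (fun _ : list nat => 0) with (fun _ : list nat => 0 * 0) by (extensionality h; ring). rewrite Ex_scal; ring. Qed.

Lemma Ex_rsum n m (F : nat -> list nat -> R) : Ex n (fun h => rsum m (fun i => F i h)) = rsum m (fun i => Ex n (F i)).
Proof. induction m; simpl. apply Ex_zero. rewrite Ex_plus, IHm. auto. Qed.

Lemma Ex_one n : Ex n (fun _ => 1) = 1.
Proof. induction n.
 - unfold Ex, prob. simpl. ring.
 - rewrite Ex_rec. transitivity (Ex n (fun _ => 1)); [|auto]. apply Ex_ext. intros h _. rewrite (rsum_ext _ _ (pr (act_of h) (S n))) by (intros; ring). apply pr_sum. Qed.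

Lemma Ex_const n c : Ex n (fun _ => c) = c.
Proof. replace (fun _ : list nat => c) with (fun _ : list nat => c * 1) by (extensionality h; ring). rewrite Ex_scal, Ex_one; ring. Qed.

Lemma Ex_marg M k F : (forall h h', (forall s, (1 <= s <= M)%nat -> act_of h s = act_of h' s) -> F h = F h') ->
  Ex (M + k) F = Ex M F.
Proof. intros HF. induction k. rewrite Nat.add_0_r; auto.
 replace (M + S k)%nat with (S (M + k)) by lia. rewrite Ex_rec, <- IHk. apply Ex_ext. intros h Hh.
 rewrite (rsum_ext _ _ (fun a => pr (act_of h) (S (M + k)) a * F h)).
 - rewrite rsum_scal_r, pr_sum. ring.
 - intros a _. f_equal. apply HF. intros s Hs. apply act_app1. lia. Qed.


Lemma act_over h s : (length h < s)%nat -> act_of h s = O.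
Proof. intros. unfold act_of. apply nth_overflow. lia. Qed.

Lemma agree_app x h h' a : length h = length h' ->
  (forall s, (1 <= s)%nat -> s <> x -> act_of h s = act_of h' s) ->
  (forall s, (1 <= s)%nat -> s <> x -> act_of (h ++ [a]) s = act_of (h' ++ [a]) s).
Proof. intros Hl' H s H1 H2.
 destruct (Nat.le_gt_cases s (length h)).
 - rewrite !act_app1 by lia. auto.
 - destruct (Nat.eq_dec s (S (length h))).
   + subst. rewrite act_app2. rewrite Hl', act_app2. auto.
   + rewrite !act_over; auto; rewrite length_app; simpl; lia. Qed.

Lemma Ex_indep x k : (1 <= x)%nat -> forall (f : nat -> list nat -> R),
  (forall b h h', length h = (x + k)%nat -> length h' = (x + k)%nat ->
     (forall s, (1 <= s)%nat -> s <> x -> act_of h s = act_of h' s) -> f b h = f b h') ->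
  (forall t a A A', (t <= x + k)%nat -> (forall s, (1 <= s)%nat -> s <> x -> A s = A' s) -> pr A t a = pr A' t a) ->
  Ex (x + k) (fun h => f (act_of h x) h) = Ex (x + k) (fun h => rsum K (fun b => pr (act_of h) x b * f b h)).
Proof. intros Hx. induction k; intros f Hf Hp.
 - rewrite Nat.add_0_r in *. destruct x as [|x']; [lia|].
   rewrite !Ex_rec. apply Ex_ext. intros h Hh.
   assert (Hf0 : forall b a, f b (h ++ [a]) = f b (h ++ [O])).
   { intros b a. apply Hf; try (rewrite length_app; simpl; lia).
     intros s H1 H2. destruct (Nat.le_gt_cases s (length h)).
     + rewrite !act_app1; auto; lia.
     + rewrite !act_over; auto; rewrite length_app; simpl; lia. }
   rewrite (rsum_ext _ _ (fun a => pr (act_of h) (S x') a * f a (h ++ [O]))).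
   2: { intros a _. rewrite <- Hh, act_app2, Hf0. auto. }
   rewrite (rsum_ext _ (fun a => pr (act_of h) (S x') a * rsum K (fun b => pr (act_of (h ++ [a])) (S x') b * f b (h ++ [a])))
     (fun a => pr (act_of h) (S x') a * rsum K (fun b => pr (act_of h) (S x') b * f b (h ++ [O])))).
   2: { intros a _. f_equal. apply rsum_ext. intros b _. rewrite pr_app by lia. rewrite Hf0. auto. }
   rewrite rsum_scal_r, pr_sum. ring.
 - replace (x + S k)%nat with (S (x + k)) by lia.
   set (M := (x + k)%nat).
   set (g := fun b h => rsum K (fun a => pr (act_of h) (S M) a * f b (h ++ [a]))).
   rewrite !Ex_rec.
   transitivity (Ex M (fun h => g (act_of h x) h)).
   { apply Ex_ext. intros h Hh. unfold g. apply rsum_ext. intros a _. rewrite act_app1 by lia. auto. }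
   rewrite IHk.
   + apply Ex_ext. intros h Hh. unfold g.
     rewrite (rsum_ext _ (fun a => pr (act_of h) (S M) a * rsum K (fun b => pr (act_of (h ++ [a])) x b * f b (h ++ [a])))
        (fun a => rsum K (fun b => pr (act_of h) x b * (pr (act_of h) (S M) a * f b (h ++ [a]))))).
     2: { intros a _. rewrite <- rsum_scal. apply rsum_ext. intros b _. rewrite pr_app by lia. ring. }
     rewrite rsum_swap. apply rsum_ext. intros b _. rewrite <- rsum_scal. auto.
   + intros b h h' Hh Hh' Hag. unfold g. apply rsum_ext. intros a _.
     rewrite (Hp (S M) a (act_of h) (act_of h')) by (auto; lia).
     f_equal. apply Hf; try (rewrite length_app; simpl; lia).
     apply agree_app; auto; lia.
   + intros t a A A' Ht Hag. apply Hp; auto; lia. Qed.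


Lemma Ex_indep_T T x M (G : nat -> (nat -> nat) -> R) : (1 <= x)%nat -> (x <= M)%nat -> (M <= T)%nat ->
  (forall b A A', (forall s, (1 <= s <= M)%nat -> s <> x -> A s = A' s) -> G b A = G b A') ->
  (forall t a A A', (t <= M)%nat -> (forall s, (1 <= s)%nat -> s <> x -> A s = A' s) -> pr A t a = pr A' t a) ->
  Ex T (fun h => G (act_of h x) (act_of h)) = Ex T (fun h => rsum K (fun b => pr (act_of h) x b * G b (act_of h))).
Proof. intros H1 H2 H3 HG Hp.
 replace T with (M + (T - M))%nat by lia.
 rewrite !Ex_marg.
 - replace M with (x + (M - x))%nat by lia. apply (Ex_indep x (M - x) H1 (fun b h => G b (act_of h))).
   + intros b h h' _ _ Hag. apply HG. intros; apply Hag; lia.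
   + intros. apply Hp; auto; lia.
 - intros h h' Hag. apply rsum_ext. intros b _. rewrite (HG b (act_of h) (act_of h')) by (intros; apply Hag; lia).
   f_equal. apply pr_dep. intros s Hs1 Hs2. apply Hag. lia.
 - intros h h' Hag. rewrite (Hag x) by lia. apply HG. intros; apply Hag; lia. Qed.

Lemma lh_dep x a A A' : A x = A' x -> (forall s, (1 <= s)%nat -> (s + d s <= x - 1)%nat -> A s = A' s) -> lh A x a = lh A' x a.
Proof. intros H1 H2. unfold lh. rewrite H1, (pr_dep x A A' a H2). auto. Qed.

Lemma yy_dep x a A A' : A x = A' x -> (forall s, (1 <= s)%nat -> (s + d s <= x - 1)%nat -> A s = A' s) -> yy A x a = yy A' x a.
Proof. intros H1 H2. unfold yy. rewrite (lh_dep x a A A' H1 H2). auto. Qed.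

Lemma q_dep i a A A' : (forall s, (1 <= s <= i)%nat -> A s = A' s) -> qf K e (ys A) i a = qf K e (ys A') i a.
Proof. intros H. assert (Hv : forall b, vf e (ys A) i b = vf e (ys A') i b).
 { intros b. unfold vf. f_equal. f_equal. apply rsum_ext. intros x Hx. unfold ys. apply yy_dep.
   - apply H; lia.
   - intros s Hs1 Hs2. apply H; lia. }
 unfold qf. rewrite Hv. f_equal. apply rsum_ext; auto. Qed.


Lemma collapse_gen b (F : nat -> R -> R) : (b < K)%nat -> (forall a, F a 0 = 0) ->
  rsum K (fun a => F a (if Nat.eqb a b then 1 else 0)) = F b 1.
Proof. intros Hb1 H0. rewrite (rsum_ext _ _ (fun a => if Nat.eqb a b then F a 1 else 0)).
 apply rsum_collapse; auto. intros a _. destruct (a =? b)%nat; auto. Qed.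

Lemma pr_dep_round i t A A' a x : (t <= S i)%nat -> (S i <= x + d x)%nat ->
  (forall s, (1 <= s)%nat -> s <> x -> A s = A' s) -> pr A t a = pr A' t a.
Proof. intros H1 H2 H. apply pr_dep. intros s Hs1 Hs2. apply H; [lia|intros ->; lia]. Qed.

Variable T : nat.

Lemma E_loss i : (i < T)%nat ->
  Ex T (fun h => l (S i) (act_of h (S i))) = Ex T (fun h => rsum K (fun b => pr (act_of h) (S i) b * l (S i) b)).
Proof. intros Hi. apply (Ex_indep_T T (S i) (S i) (fun b A => l (S i) b)); try lia; auto.
 intros t a A A' Ht Hag. apply (pr_dep_round i t A A' a (S i)); auto; lia. Qed.

Lemma E_drift i x : (i < T)%nat -> (1 <= x)%nat -> (x < S i)%nat -> (S i <= x + d x)%nat ->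
  Ex T (fun h => rsum K (fun a => pr (act_of h) (S i) a * lh (act_of h) x a)) <= 1.
Proof. intros Hi Hx1 Hx2 Hx3.
 set (G := fun b A => rsum K (fun a => pr A (S i) a * (l x a * (if Nat.eqb a b then 1 else 0) / pr A x a))).
 change (Ex T (fun h => G (act_of h x) (act_of h)) <= 1).
 rewrite (Ex_indep_T T x (S i) G); try lia.
 - rewrite <- (Ex_one T). apply Ex_le. intros h _. rewrite <- (pr_sum (act_of h) (S i)).
   apply rsum_le. intros b Hb0. unfold G.
   rewrite (collapse_gen b (fun a c => pr (act_of h) (S i) a * (l x a * c / pr (act_of h) x a))) by (auto; intros; unfold Rdiv; ring).
   pose proof (pr_pos (act_of h) x b). pose proof (pr_pos (act_of h) (S i) b). destruct (Hl x b).
   replace (pr (act_of h) x b * (pr (act_of h) (S i) b * (l x b * 1 / pr (act_of h) x b))) with (pr (act_of h) (S i) b * l x b) by (field; lra).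
   nra.
 - intros b A A' Hag. unfold G. apply rsum_ext. intros a _. f_equal.
   + apply pr_dep. intros s H1 H2. apply Hag; [lia|intros ->; lia].
   + f_equal. apply pr_dep. intros s H1 H2. apply Hag; [lia|intros ->; lia].
 - intros t a A A' Ht Hag. apply (pr_dep_round i t A A' a x); auto. Qed.

Lemma E_q i : (i < T)%nat ->
  Ex T (fun h => rsum K (fun a => qf K e (ys (act_of h)) i a * lh (act_of h) (S i) a)) =
  Ex T (fun h => rsum K (fun a => qf K e (ys (act_of h)) i a * l (S i) a)).
Proof. intros Hi.
 set (G := fun b A => rsum K (fun a => qf K e (ys A) i a * (l (S i) a * (if Nat.eqb a b then 1 else 0) / pr A (S i) a))).
 change (Ex T (fun h => G (act_of h (S i)) (act_of h)) = Ex T (fun h => rsum K (fun a => qf K e (ys (act_of h)) i a * l (S i) a))).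
 rewrite (Ex_indep_T T (S i) (S i) G); try lia.
 - apply Ex_ext. intros h _. apply rsum_ext. intros b Hb0. unfold G.
   rewrite (collapse_gen b (fun a c => qf K e (ys (act_of h)) i a * (l (S i) a * c / pr (act_of h) (S i) a))) by (auto; intros; unfold Rdiv; ring).
   pose proof (pr_pos (act_of h) (S i) b). field. lra.
 - intros b A A' Hag. unfold G. apply rsum_ext. intros a _. f_equal.
   + apply q_dep. intros s Hs. apply Hag; lia.
   + f_equal. apply pr_dep. intros s H1 H2. apply Hag; [lia|intros ->; lia].
 - intros t a A A' Ht Hag. apply (pr_dep_round i t A A' a (S i)); auto; lia. Qed.

Lemma E_astar i astar : (i < T)%nat -> (astar < K)%nat ->
  Ex T (fun h => lh (act_of h) (S i) astar) = l (S i) astar.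
Proof. intros Hi Ha.
 set (G := fun b A => l (S i) astar * (if Nat.eqb astar b then 1 else 0) / pr A (S i) astar).
 change (Ex T (fun h => G (act_of h (S i)) (act_of h)) = l (S i) astar).
 rewrite (Ex_indep_T T (S i) (S i) G); try lia.
 - rewrite <- (Ex_const T (l (S i) astar)). apply Ex_ext. intros h _. unfold G.
   rewrite (rsum_ext _ _ (fun b => (fun a c => pr (act_of h) (S i) a * (l (S i) astar * c / pr (act_of h) (S i) astar)) b (if Nat.eqb b astar then 1 else 0))).
   2: { intros b _. rewrite Nat.eqb_sym. auto. }
   rewrite (collapse_gen astar (fun a c => pr (act_of h) (S i) a * (l (S i) astar * c / pr (act_of h) (S i) astar))) by (auto; intros; unfold Rdiv; ring).
   pose proof (pr_pos (act_of h) (S i) astar). field. lra.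
 - intros b A A' Hag. unfold G. f_equal. apply pr_dep. intros s H1 H2. apply Hag; [lia|intros ->; lia].
 - intros t a A A' Ht Hag. apply (pr_dep_round i t A A' a (S i)); auto; lia. Qed.

Lemma E_quad i : (i < T)%nat ->
  Ex T (fun h => rsum K (fun a => qf K e (ys (act_of h)) i a * (lh (act_of h) (S i) a)^2)) =
  Ex T (fun h => rsum K (fun b => qf K e (ys (act_of h)) i b * (l (S i) b)^2 / pr (act_of h) (S i) b)).
Proof. intros Hi.
 set (G := fun b A => rsum K (fun a => qf K e (ys A) i a * (l (S i) a * (if Nat.eqb a b then 1 else 0) / pr A (S i) a)^2)).
 change (Ex T (fun h => G (act_of h (S i)) (act_of h)) = Ex T (fun h => rsum K (fun b => qf K e (ys (act_of h)) i b * (l (S i) b)^2 / pr (act_of h) (S i) b))).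
 rewrite (Ex_indep_T T (S i) (S i) G); try lia.
 - apply Ex_ext. intros h _. apply rsum_ext. intros b Hb0. unfold G.
   rewrite (collapse_gen b (fun a c => qf K e (ys (act_of h)) i a * (l (S i) a * c / pr (act_of h) (S i) a)^2)) by (auto; intros; unfold Rdiv; ring).
   pose proof (pr_pos (act_of h) (S i) b). field. lra.
 - intros b A A' Hag. unfold G. apply rsum_ext. intros a _. f_equal.
   + apply q_dep. intros s Hs. apply Hag; lia.
   + f_equal. f_equal. apply pr_dep. intros s H1 H2. apply Hag; [lia|intros ->; lia].
 - intros t a A A' Ht Hag. apply (pr_dep_round i t A A' a (S i)); auto; lia. Qed.


Definition Mcount s := rsum s (fun x => if s <=? x + d x then gind x else 0).

Lemma pind_le1 x : 0 <= pind x <= 1.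
Proof. destruct (pind_01 x) as [E|E]; rewrite E; lra. Qed.

Lemma E_Mc i : (i < T)%nat ->
  Ex T (fun h => rsum K (fun a => pr (act_of h) (S i) a * Mc (act_of h) (S i) a)) <= Mcount (S i).
Proof. intros Hi. unfold Mc, Mcount.
 rewrite (Ex_ext T _ (fun h => rsum (S i) (fun x => if S i <=? x + d x then rsum K (fun a => pr (act_of h) (S i) a * yy (act_of h) x a) else 0))).
 2: { intros h _. rewrite (rsum_ext K _ (fun a => rsum (S i) (fun x => if S i <=? x + d x then pr (act_of h) (S i) a * yy (act_of h) x a else 0))).
      - rewrite rsum_swap. apply rsum_ext. intros x _. destruct (_ <=? _)%nat; auto. apply rsum_zero.
      - intros a _. rewrite <- rsum_scal. apply rsum_ext. intros x _. destruct (_ <=? _)%nat; ring. }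
 rewrite Ex_rsum. apply rsum_le. intros x Hx.
 destruct (Nat.leb_spec (S i) (x + d x)); [|rewrite Ex_zero; lra].
 unfold gind, pind, yy. destruct (Nat.leb_spec 1 x).
 - destruct (Rlt_dec (INR (d x)) beta).
   + apply E_drift; auto.
   + rewrite (Ex_ext T _ (fun _ => 0)), Ex_zero; [lra|]. intros h _. rewrite (rsum_ext _ _ (fun _ => 0)), rsum_zero; auto. intros; ring.
 - rewrite (Ex_ext T _ (fun _ => 0)), Ex_zero; [lra|]. intros h _. rewrite (rsum_ext _ _ (fun _ => 0)), rsum_zero; auto. intros; ring. Qed.

Lemma ys_eq A i a : ys A i a = pind (S i) * lh A (S i) a.
Proof. unfold ys, yy, pind. simpl (1 <=? S i)%nat. destruct Rlt_dec; ring. Qed.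

Lemma E_Q i : (i < T)%nat ->
  Ex T (fun h => rsum K (fun a => qf K e (ys (act_of h)) i a * l (S i) a)) <=
  (1 - pind (S i)) + Ex T (fun h => rsum K (fun a => qf K e (ys (act_of h)) i a * ys (act_of h) i a)).
Proof. intros Hi. destruct (pind_01 (S i)) as [E|E].
 - rewrite (Ex_ext T (fun h => rsum K (fun a => qf K e (ys (act_of h)) i a * ys (act_of h) i a)) (fun _ => 0)).
   + rewrite Ex_zero, E. replace (1 - 0 + 0) with (Ex T (fun _ => 1)) by (rewrite Ex_one; ring). apply Ex_le. intros h _.
     rewrite <- (qf_sum K e (ys (act_of h)) i HK). apply rsum_le. intros a _. pose proof (qf_nonneg K e (ys (act_of h)) i a HK). destruct (Hl (S i) a). nra.
   + intros h _. rewrite (rsum_ext _ _ (fun _ => 0)), rsum_zero; auto. intros a _. rewrite ys_eq, E. ring.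
 - rewrite E. rewrite (Ex_ext T (fun h => rsum K (fun a => qf K e (ys (act_of h)) i a * ys (act_of h) i a))
      (fun h => rsum K (fun a => qf K e (ys (act_of h)) i a * lh (act_of h) (S i) a))).
   + rewrite E_q by auto. lra.
   + intros h _. apply rsum_ext. intros a _. rewrite ys_eq, E. ring. Qed.

Lemma E_ys_astar i astar : (i < T)%nat -> (astar < K)%nat -> Ex T (fun h => ys (act_of h) i astar) <= l (S i) astar.
Proof. intros Hi Ha. rewrite (Ex_ext T _ (fun h => pind (S i) * lh (act_of h) (S i) astar)) by (intros; apply ys_eq).
 rewrite Ex_scal, E_astar by auto. destruct (pind_01 (S i)) as [E|E]; rewrite E; destruct (Hl (S i) astar); lra. Qed.

Lemma q_le_pr A i b : qf K e (ys A) i b <= exp 1 / 2 * pr A (S i) b.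
Proof. pose proof (q_ratio A i b). pose proof (Mc_bound A (S i) ltac:(lia)).
 pose proof He0. pose proof Heb. pose proof exp_1_gt. pose proof (qf_nonneg K e (ys A) i b HK).
 set (S0 := rsum K (fun b0 => pr A (S i) b0 * Mc A (S i) b0)) in *.
 assert (HeS : e * S0 <= 1 / (2 * exp 1)).
 { apply Rle_trans with (e * (2 * beta)). apply Rmult_le_compat_l; lra.
   apply Rmult_le_reg_l with (2 * exp 1); [lra|]. replace (2 * exp 1 * (1 / (2 * exp 1))) with 1 by (field; lra). nra. }
 assert (1 / (2 * exp 1) <= 1/5).
 { apply Rmult_le_reg_l with (2 * exp 1); [lra|]. replace (2 * exp 1 * (1 / (2 * exp 1))) with 1 by (field; lra). lra. }
 assert (H9 : 1 <= exp 1 / 2 * (1 - e * S0)) by nra.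
 assert (qf K e (ys A) i b * 1 <= qf K e (ys A) i b * (exp 1 / 2 * (1 - e * S0))) by (apply Rmult_le_compat_l; auto).
 assert (exp 1 / 2 * (qf K e (ys A) i b * (1 - e * S0)) <= exp 1 / 2 * pr A (S i) b) by (apply Rmult_le_compat_l; lra).
 nra. Qed.

Lemma E_quad_bound i : (i < T)%nat ->
  Ex T (fun h => rsum K (fun a => qf K e (ys (act_of h)) i a * (ys (act_of h) i a)^2)) <= exp 1 / 2 * INR K.
Proof. intros Hi.
 rewrite (Ex_ext T _ (fun h => pind (S i) * rsum K (fun a => qf K e (ys (act_of h)) i a * (lh (act_of h) (S i) a)^2))).
 2: { intros h _. rewrite <- rsum_scal. apply rsum_ext. intros a _. rewrite ys_eq. destruct (pind_01 (S i)) as [E|E]; rewrite E; ring. }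
 rewrite Ex_scal, E_quad by auto.
 assert (Ex T (fun h => rsum K (fun b => qf K e (ys (act_of h)) i b * l (S i) b ^ 2 / pr (act_of h) (S i) b)) <= exp 1 / 2 * INR K).
 { rewrite <- (Ex_const T (exp 1 / 2 * INR K)). apply Ex_le. intros h _.
   rewrite Rmult_comm, <- rsum_const. apply rsum_le. intros b _.
   pose proof (q_le_pr (act_of h) i b). pose proof (pr_pos (act_of h) (S i) b). destruct (Hl (S i) b).
   pose proof (qf_nonneg K e (ys (act_of h)) i b HK).
   apply Rmult_le_reg_r with (pr (act_of h) (S i) b); auto.
   replace (qf K e (ys (act_of h)) i b * l (S i) b ^ 2 / pr (act_of h) (S i) b * pr (act_of h) (S i) b) with (qf K e (ys (act_of h)) i b * l (S i) b ^ 2) by (field; lra).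
   assert (l (S i) b ^ 2 <= 1) by nra. nra. }
 pose proof exp1_pos. pose proof (pos_INR K).
 assert (0 <= Ex T (fun h => rsum K (fun b => qf K e (ys (act_of h)) i b * l (S i) b ^ 2 / pr (act_of h) (S i) b))).
 { rewrite <- (Ex_zero T). apply Ex_le. intros h _. apply rsum_nonneg. intros b _.
   apply Rdiv_le_0_compat; [|apply pr_pos]. apply Rmult_le_pos; [apply qf_nonneg; auto|]. apply pow2_ge_0. }
 destruct (pind_01 (S i)) as [E|E]; rewrite E; nra. Qed.


Lemma main_bound astar : (astar < K)%nat ->
  Ex T (fun h => rsum T (fun i => l (S i) (act_of h (S i)))) <=
  ln (INR K) / e + rsum T (fun i => l (S i) astar) + e * (exp 1 / 2 * INR K) * INR T
  + rsum T (fun i => (1 - pind (S i)) + e * Mcount (S i)).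
Proof. intros Ha. pose proof He0 as He0'. rewrite Ex_rsum.
 set (Y := fun i => Ex T (fun h => rsum K (fun a => qf K e (ys (act_of h)) i a * ys (act_of h) i a))).
 assert (H1 : rsum T (fun i => Ex T (fun h => l (S i) (act_of h (S i)))) <= rsum T (fun i => Y i + ((1 - pind (S i)) + e * Mcount (S i)))).
 { apply rsum_le. intros i Hi. rewrite E_loss by auto.
   eapply Rle_trans. { apply Ex_le. intros h _. apply drift. }
   rewrite Ex_plus, Ex_scal.
   pose proof (E_Q i Hi). pose proof (E_Mc i Hi). unfold Y. nra. }
 assert (H2 : rsum T Y <= ln (INR K) / e + rsum T (fun i => l (S i) astar) + e * (exp 1 / 2 * INR K) * INR T).
 { unfold Y. rewrite <- Ex_rsum.
   eapply Rle_trans. { apply Ex_le. intros h _. apply (potential K T e (ys (act_of h)) astar HK He0' Ha).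
     intros; unfold ys; apply yy_nonneg. }
   rewrite !Ex_plus, Ex_const, Ex_scal, !Ex_rsum.
   assert (rsum T (fun i => Ex T (fun h => ys (act_of h) i astar)) <= rsum T (fun i => l (S i) astar)).
   { apply rsum_le. intros i Hi. apply E_ys_astar; auto. }
   assert (rsum T (fun i => Ex T (fun h => rsum K (fun a => qf K e (ys (act_of h)) i a * ys (act_of h) i a ^ 2))) <= rsum T (fun _ => exp 1 / 2 * INR K)).
   { apply rsum_le. intros i Hi. apply E_quad_bound; auto. }
   rewrite rsum_const in H0.
   assert (e * rsum T (fun i => Ex T (fun h => rsum K (fun a => qf K e (ys (act_of h)) i a * ys (act_of h) i a ^ 2))) <= e * (INR T * (exp 1 / 2 * INR K))) by (apply Rmult_le_compat_l; lra).
   lra. }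
 rewrite rsum_plus in H1. lra. Qed.

Lemma delay_bound : rsum T (fun i => (1 - pind (S i)) + e * Mcount (S i)) <= (e + / beta) * total_delay T d.
Proof. pose proof He0. unfold total_delay.
 rewrite rsum_plus, rsum_scal.
 assert (Hsw : rsum T (fun i => Mcount (S i)) <= rsum T (fun i => pind (S i) * INR (d (S i)))).
 { unfold Mcount.
   rewrite (rsum_ext T _ (fun i => rsum (S T) (fun x => if ((x <? S i) && (S i <=? x + d x))%bool then gind x else 0))).
   2: { intros i Hi. rewrite (rsum_ext (S T) _ (fun x => if (x <? S i)%nat then (if (S i <=? x + d x) then gind x else 0) else 0)).
        2: { intros x _. destruct (x <? S i)%nat; destruct (S i <=? x + d x)%nat; auto. }
        assert (Haux : forall m, (S i <= m)%nat -> rsum m (fun x => if (x <? S i)%nat then (if (S i <=? x + d x) then gind x else 0) else 0) = rsum (S i) (fun x => if S i <=? x + d x then gind x else 0)).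
        { intros m Hm. induction Hm.
          - apply rsum_ext. intros x Hx. destruct (Nat.ltb_spec x (S i)); auto; lia.
          - change (rsum (S m) ?f) with (rsum m f + f m). cbv beta. rewrite IHHm. destruct (Nat.ltb_spec m (S i)); [lia|ring]. }
        symmetry. apply Haux. lia. }
   rewrite rsum_swap. rewrite rsum_shift.
   assert (E0 : rsum T (fun i => if ((0 <? S i) && (S i <=? 0 + d 0))%bool then gind 0 else 0) = 0).
   { rewrite (rsum_ext _ _ (fun _ => 0)), rsum_zero; auto. intros i _. unfold gind. simpl (1 <=? 0)%nat. destruct (_ && _)%bool; auto. }
   rewrite E0, Rplus_0_l. apply rsum_le. intros j Hj.
   unfold gind. simpl (1 <=? S j)%nat.
   rewrite (rsum_ext T _ (fun i => pind (S j) * (if ((S j <? S i) && (S i <=? S j + d (S j)))%bool then 1 else 0))).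
   2: { intros i _. destruct (_ && _)%bool; ring. }
   rewrite rsum_scal. pose proof (pind_le1 (S j)). pose proof (count_interval T (S j) (d (S j))).
   apply Rmult_le_compat_l; lra. }
 assert (Hpt : forall i, (1 - pind (S i)) + e * (pind (S i) * INR (d (S i))) <= (e + / beta) * INR (d (S i))).
 { intros i. unfold pind. pose proof (pos_INR (d (S i))). pose proof (Rinv_0_lt_compat _ Hb). destruct Rlt_dec.
   - nra.
   - assert (1 <= / beta * INR (d (S i))).
     { apply Rmult_le_reg_l with beta; auto. rewrite <- Rmult_assoc, Rinv_r by lra. lra. }
     nra. }
 assert (Hm1 : e * rsum T (fun i => Mcount (S i)) <= e * rsum T (fun i => pind (S i) * INR (d (S i)))) by (apply Rmult_le_compat_l; lra).
 assert (Hm2 : rsum T (fun i => 1 - pind (S i)) + rsum T (fun i => e * (pind (S i) * INR (d (S i)))) <= (e + / beta) * rsum T (fun i => INR (d (S i)))).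
 { rewrite <- rsum_plus, <- rsum_scal. apply rsum_le. intros; apply Hpt. }
 rewrite rsum_scal in Hm2. lra. Qed.

End Dew.

Lemma best_exists (K : nat) (f : nat -> R) (L : list nat) : (forall x, In x L -> (x < K)%nat) -> (0 < K)%nat ->
  exists a, (a < K)%nat /\ fold_right Rmin (f O) (map f L) = f a.
Proof. intros HL HK. induction L as [|x L IH]; simpl.
 - exists O; auto.
 - destruct IH as [a [Ha E]]. intros; apply HL; right; auto. rewrite E.
   destruct (Rle_dec (f x) (f a)).
   + exists x. split. apply HL; left; auto. apply Rmin_left; auto.
   + exists a. split; auto. apply Rmin_right; lra. Qed.

Theorem corollary4 (K T : nat) (l : nat -> nat -> R) (d : nat -> nat) :
  (2 <= K)%nat -> (1 <= T)%nat ->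
  (forall t a, 0 <= l t a <= 1) ->
  let D := total_delay T d in
  let beta := sqrt (((exp 1 * INR K * INR T / 2 + D) / (4 * exp 1) + D)
                    / (4 * exp 1 * ln (INR K))) in
  let eta := / (4 * exp 1 * beta) in
  regret_skipper_dew K T l d eta beta beta
    <= 2 * sqrt ((INR K * INR T * exp 1 / 2 + (1 + 4 * exp 1) * D) * ln (INR K)).
Proof. intros HK2 HT Hl D beta eta.
 assert (HK : (1 <= K)%nat) by lia.
 pose proof exp1_pos as He1. pose proof exp_1_gt as He2.
 assert (HD : 0 <= D).
 { unfold D, total_delay. apply rsum_nonneg. intros; apply pos_INR. }
 assert (HlnK : 0 < ln (INR K)).
 { rewrite <- ln_1. apply ln_increasing; [lra|]. apply lt_1_INR; lia. }
 assert (HKr : 2 <= INR K) by (replace 2 with (INR 2) by (simpl; ring); apply le_INR; lia).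
 assert (HTr : 1 <= INR T) by (replace 1 with (INR 1) by (simpl; ring); apply le_INR; lia).
 set (X := (exp 1 * INR K * INR T / 2 + D) / (4 * exp 1) + D) in *.
 set (c := 4 * exp 1 * ln (INR K)).
 assert (Hc : 0 < c) by (unfold c; nra).
 assert (HX : 0 < X).
 { unfold X. assert (0 < exp 1 * INR K * INR T) by (apply Rmult_lt_0_compat; [apply Rmult_lt_0_compat|]; lra). assert (0 < exp 1 * INR K * INR T / 2 + D) by lra.
   assert (0 < (exp 1 * INR K * INR T / 2 + D) / (4 * exp 1)) by (apply Rdiv_lt_0_compat; lra). lra. }
 assert (Hbeta2 : beta * beta = X / c).
 { unfold beta. apply sqrt_sqrt. apply Rlt_le, Rdiv_lt_0_compat; auto. }
 assert (Hbeta : 0 < beta).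
 { unfold beta. apply sqrt_lt_R0. apply Rdiv_lt_0_compat; auto. }
 assert (Heta : dew_rate eta beta = eta).
 { unfold dew_rate, eta. apply Rmin_left. lra. }
 assert (He : eta = / (4 * exp 1 * beta)) by reflexivity.
 unfold regret_skipper_dew.
 destruct (best_exists K (cum_loss T l) (seq 0 K)) as [astar [Ha Hbest]].
 { intros x Hx. apply in_seq in Hx. lia. } lia.
 unfold best_loss. rewrite Hbest.
 change (expected_loss K T l d eta beta beta) with
   (Ex K l d (dew_rate eta beta) beta T (fun h => rsum T (fun i => l (S i) (act_of h (S i))))).
 rewrite Heta.
 pose proof (main_bound K l d eta beta HK Hl Hbeta He T astar Ha) as Hm.
 pose proof (delay_bound K d eta beta HK Hbeta He T) as Hd.
 fold D in Hd.
 unfold cum_loss.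
 assert (Hfin : ln (INR K) / eta + eta * (exp 1 / 2 * INR K) * INR T + (eta + / beta) * D = 2 * (c * beta)).
 { unfold eta. assert (X = c * (beta * beta)) by (rewrite Hbeta2; field; lra).
   unfold X in H. unfold c in *.
   assert (H' : exp 1 * INR K * INR T / 2 + D + 4 * exp 1 * D = 16 * exp 1^2 * ln (INR K) * beta^2).
   { apply Rmult_eq_compat_l with (r := 4 * exp 1) in H. field_simplify in H; [|lra]. lra. }
   field_simplify_eq; [|lra]. lra. }
 assert (Hrhs : sqrt ((INR K * INR T * exp 1 / 2 + (1 + 4 * exp 1) * D) * ln (INR K)) = c * beta).
 { replace ((INR K * INR T * exp 1 / 2 + (1 + 4 * exp 1) * D) * ln (INR K)) with ((c * beta) * (c * beta)).
   - apply sqrt_square. nra.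
   - transitivity (c * (c * (beta * beta))); [ring|]. rewrite Hbeta2. unfold X, c. field. lra. }
 rewrite Hrhs. lra. Qed.
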